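(* Let $K\subset Y$ be a pointed closed convex cone in a real normed space $Y$, and let $A,B$ be nonempty subsets of $Y$. (i) If $A\subset B+K$, then $$y^*(A)+[0,+\infty)\subset y^*(B)+[0,+\infty)\quad\text{for all } y^*\in K^+\setminus\{0\}.$$ Conversely, if $B+K$ is convex and closed and this inclusion holds for all $y^*\in K^+\setminus\{0\}$, then $A\subset B+K$. (ii) Suppose $\operatorname{int}K\neq\emptyset$. If $A\subset B+\operatorname{int}K$, then $$y^*(A)\subset y^*(B)+(0,+\infty)\quad\text{for all } y^*\in K^+\setminus\{0\}.$$ Conversely, if $B+K$ is convex and this inclusion holds for all $y^*\in K^+\setminus\{0\}$, then $A\subset B+\operatorname{int}K$.
   Context: The positive dual cone is $K^+=\{y^*\in Y^*: y^*(k)\ge 0 \text{ for all } k\in K\}$, where $Y^*$ is the topological dual of $Y$. For $y^*\in Y^*$ and $S\subset Y$, $y^*(S)=\{y^*(s): s\in S\}$. *)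

(* Defs.v *)
From HB Require Import structures.
From mathcomp Require Import all_boot all_order all_algebra.
From mathcomp Require Import all_classical all_reals all_analysis.
Set Implicit Arguments. Unset Strict Implicit. Unset Printing Implicit Defensive.
Import Order.TTheory GRing.Theory Num.Theory.
Import numFieldNormedType.Exports.
Local Open Scope classical_set_scope.
Local Open Scope ring_scope.

Section Defs.
Variables (R : realType) (Y : normedModType R).

Definition set_add (A B : set Y) : set Y := [set a + b | a in A & b in B].

Definition setR_add (S T : set R) : set R := [set s + t | s in S & t in T].

Definition convexY (C : set Y) : Prop :=
  forall x y (t : R), 0 <= t -> t <= 1 -> C x -> C y -> C (t *: x + (1 - t) *: y).

Definition is_cone (K : set Y) : Prop :=
  forall k (t : R), 0 <= t -> K k -> K (t *: k).

Definition pointed (K : set Y) : Prop :=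
  K `&` [set - k | k in K] = [set 0].

Definition pointed_closed_convex_cone (K : set Y) : Prop :=
  [/\ is_cone K, convexY K, closed K & pointed K].

Definition in_dual (f : Y -> R) : Prop :=
  [/\ forall x y, f (x + y) = f x + f y,
      forall (a : R) x, f (a *: x) = a * f x
    & continuous f].

Definition in_dual_cone_nz (K : set Y) (f : Y -> R) : Prop :=
  [/\ in_dual f, (forall k, K k -> 0 <= f k) & f <> (fun _ => 0)].

End Defs.

(* Main.v *)
Set Warnings "-all".
Require Import Defs.
From HB Require Import structures.
From mathcomp Require Import all_boot all_order all_algebra.
From mathcomp Require Import all_classical all_reals all_analysis.
From mathcomp Require Import ring lra.
Import Order.TTheory GRing.Theory Num.Theory.
Import numFieldNormedType.Exports.
Local Open Scope classical_set_scope.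
Local Open Scope ring_scope.
Set Implicit Arguments. Unset Strict Implicit.

Definition gvalid (R : realType) (Y : normedModType R) (C : set Y) (G : set (Y * R)) :=
  [/\ forall x a b, G (x,a) -> G (x,b) -> a = b,
      forall x y a b, G (x,a) -> G (y,b) -> G (x+y, a+b),
      forall x a t, G (x,a) -> G (t *: x, t * a)
    & forall x a, G (x,a) -> C x -> a <= 1].

Lemma key_ineq (R : realType) (a b s t : R) : 0 < s -> 0 < t ->
  (t / (s + t)) * b + (1 - t / (s + t)) * a <= 1 -> (b - 1) / s <= (1 - a) / t.
Proof.
move=> s0 t0 H.
have st0 : 0 < s + t by lra.
have E : 1 - t / (s + t) = s / (s + t) by field; lra.
rewrite E in H.
have H2 : t * b + s * a <= s + t.
  have := H; rewrite -(ler_pM2r st0) mul1r => H'.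
  have -> : t * b + s * a = (t / (s + t) * b + s / (s + t) * a) * (s + t).
    by field; lra.
  exact: H'.
rewrite ler_pdivrMr // mulrAC ler_pdivlMr //; nra.
Qed.

Lemma gext (R : realType) (Y : normedModType R) (C : set Y) (G : set (Y * R)) (z : Y) :
  convexY C -> (forall y, exists s, 0 < s /\ C (s *: y)) -> gvalid C G -> G (0, 0) ->
  (forall a, ~ G (z, a)) ->
  exists G', [/\ gvalid C G', G `<=` G' & exists al, G' (z, al)].
Proof.
move=> cC absC [Gf Ga Gs Gb] G00 nz.
pose Lw := [set v | exists x a s, [/\ 0 < s, G (x,a), C (x - s *: z) & v = (a - 1) / s]].
pose Up := [set v | exists x a t, [/\ 0 < t, G (x,a), C (x + t *: z) & v = (1 - a) / t]].
have LU : forall l u, Lw l -> Up u -> l <= u.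
  move=> _ _ [y [b [s [s0 Gyb Cy ->]]]] [x [a [t [t0 Gxa Cx ->]]]].
  apply: key_ineq => //.
  have st0 : 0 < s + t by lra.
  set la := t / (s + t).
  have la0 : 0 <= la by rewrite /la divr_ge0 // ltW.
  have la1 : la <= 1 by rewrite /la ler_pdivrMr // mul1r; lra.
  apply: (Gb (la *: y + (1 - la) *: x)).
    by apply: (Ga); apply: (Gs).
  have -> : la *: y + (1 - la) *: x = la *: (y - s *: z) + (1 - la) *: (x + t *: z).
    rewrite !scalerDr !scalerN !scalerA.
    have -> : (1 - la) * t = la * s by rewrite /la; field; lra.
    by rewrite addrACA addNr addr0.
  by apply: cC.
have [s1 [s10 Cs1]] := absC (- z).
have [t1 [t10 Ct1]] := absC z.
have Lw0 : Lw ((0 - 1) / s1).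
  by exists 0, 0, s1; split => //; rewrite sub0r -scalerN.
have Up0 : Up ((1 - 0) / t1).
  by exists 0, 0, t1; split => //; rewrite add0r.
have hsL : has_sup Lw.
  split; first by exists ((0 - 1) / s1).
  by exists ((1 - 0) / t1) => l Ll; apply: LU.
pose al := sup Lw.
have Lal : forall l, Lw l -> l <= al by move=> l Ll; apply: sup_upper_bound.
have alU : forall u, Up u -> al <= u.
  by move=> u Uu; apply: ge_sup; [exists ((0 - 1) / s1)| move=> l Ll; apply: LU].
pose G' := [set p | exists x a t, G (x,a) /\ p = (x + t *: z, a + t * al)].
exists G'; split.
- split.
  + move=> w c d [x [a [t [Gxa E1]]]] [x' [a' [t' [Gxa' E2]]]].
    case: E1 => E1 ->; case: E2 => E2 ->.
    have [tt|tt] := eqVneq t t'.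
      subst t'.
      have xx : x = x' by apply: (addIr (t *: z)); rewrite -E1 -E2.
      subst x'; by rewrite (Gf _ _ _ Gxa Gxa').
    exfalso; apply: (nz ((t - t')^-1 * (a' + (-1) * a))).
    have -> : z = (t - t')^-1 *: (x' + (-1) *: x).
      apply: (@scalerI _ _ (t - t')); first by rewrite subr_eq0.
      rewrite scalerA mulfV ?subr_eq0 // scale1r scaleN1r scalerBl.
      apply/eqP; rewrite subr_eq addrAC -E2 E1 addrAC subrr add0r //.
    by apply: (Gs); apply: (Ga) => //; apply: (Gs).
  + move=> w1 w2 c1 c2 [x [a [t [Gxa E1]]]] [y [b [s [Gyb E2]]]].
    case: E1 => -> ->; case: E2 => -> ->.
    exists (x + y), (a + b), (t + s); split; first exact: (Ga).
    congr pair; first by rewrite scalerDl addrACA.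
    by rewrite mulrDl addrACA.
  + move=> w c r [x [a [t [Gxa E1]]]]; case: E1 => -> ->.
    exists (r *: x), (r * a), (r * t); split; first exact: (Gs).
    by rewrite scalerDr scalerA mulrDr mulrA.
  + move=> w c [x [a [t [Gxa E1]]]]; case: E1 => -> -> Cw.
    have [t0|t0|t0] := ltgtP t 0.
    * have : Lw ((a - 1) / (- t)).
        by exists x, a, (- t); split => //; [lra | rewrite scaleNr opprK].
      move=> /Lal; rewrite ler_pdivrMr; last by lra.
      nra.
    * have : Up ((1 - a) / t) by exists x, a, t.
      move=> /alU; rewrite ler_pdivlMr //; nra.
    * rewrite t0 mul0r addr0; apply: (Gb x) => //; by rewrite t0 scale0r addr0 in Cw.
- move=> [x a] Gxa; exists x, a, 0; split => //.
  by rewrite scale0r mul0r !addr0.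
- by exists al; exists 0, 0, 1; split => //; rewrite scale1r mul1r !add0r.
Qed.

Lemma union_valid (R : realType) (Y : normedModType R) (C : set Y) (G0 : set (Y * R))
  (F : set (set (Y * R))) : gvalid C G0 -> F `<=` (fun G => gvalid C (G0 `|` G)) ->
  total_on F subset -> gvalid C (G0 `|` \bigcup_(X in F) X).
Proof.
move=> V0 FP Ftot.
have two : forall p q, (G0 `|` \bigcup_(X in F) X) p -> (G0 `|` \bigcup_(X in F) X) q ->
    exists Gm, [/\ gvalid C Gm, Gm p, Gm q & Gm `<=` G0 `|` \bigcup_(X in F) X].
  move=> p q [Hp|[X FX Xp]] [Hq|[X' FX' Xq]].
  - by exists G0; split => // w Hw; left.
  - exists (G0 `|` X'); split; [exact: FP | by left | by right |].
    by move=> w [Hw|Hw]; [left|right; exists X'].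
  - exists (G0 `|` X); split; [exact: FP | by right | by left |].
    by move=> w [Hw|Hw]; [left|right; exists X].
  - have [XX'|X'X] := Ftot _ _ FX FX'.
    + exists (G0 `|` X'); split; [exact: FP | by right; apply: XX' | by right |].
      by move=> w [Hw|Hw]; [left|right; exists X'].
    + exists (G0 `|` X); split; [exact: FP | by right | by right; apply: X'X |].
      by move=> w [Hw|Hw]; [left|right; exists X].
split.
- move=> x a b Ha Hb; have [Gm [[Gf _ _ _] Ha' Hb' _]] := two _ _ Ha Hb; exact: Gf Ha' Hb'.
- move=> x y a b Ha Hb; have [Gm [[_ Ga _ _] Ha' Hb' sub]] := two _ _ Ha Hb.
  exact/sub/Ga.
- move=> x a t Ha; have [Gm [[_ _ Gs _] Ha' _ sub]] := two _ _ Ha Ha.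
  exact/sub/Gs.
- move=> x a Ha; have [Gm [[_ _ _ Gb] Ha' _ _]] := two _ _ Ha Ha; exact: Gb.
Qed.

Lemma core (R : realType) (Y : normedModType R) (C : set Y) (x0 : Y) :
  convexY C -> C 0 -> (forall y, exists s, 0 < s /\ C (s *: y)) -> ~ C x0 ->
  exists F : Y -> R, [/\ forall x y, F (x + y) = F x + F y,
     forall (t : R) x, F (t *: x) = t * F x, F x0 = 1 & forall c, C c -> F c <= 1].
Proof.
move=> cC C0 absC nCx0.
have x00 : x0 != 0 by apply/eqP => E; apply: nCx0; rewrite E.
pose G0 := [set p : Y * R | exists l, p = (l *: x0, l)].
have V0 : gvalid C G0.
  split.
  - move=> x a b [l E1] [m E2]; case: E1 => E1 ->; case: E2 => E2 ->.
    have : (l - m) *: x0 == 0 by rewrite scalerBl -E1 -E2 subrr.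
    rewrite scaler_eq0 (negbTE x00) orbF subr_eq0 => /eqP //.
  - move=> x y a b [l E1] [m E2]; case: E1 => -> ->; case: E2 => -> ->.
    by exists (l + m); rewrite scalerDl.
  - move=> x a t [l E1]; case: E1 => -> ->.
    by exists (t * l); rewrite scalerA.
  - move=> x a [l E1]; case: E1 => -> -> Cl.
    rewrite leNgt; apply/negP => l1; apply: nCx0.
    have l0 : 0 < l by lra.
    have -> : x0 = l^-1 *: (l *: x0) + (1 - l^-1) *: 0.
      by rewrite scaler0 addr0 scalerA mulVf ?gt_eqF // scale1r.
    apply: cC => //.
    + by rewrite invr_ge0 ltW.
    + by rewrite invf_le1 // ltW.
pose P := fun G : set (Y * R) => gvalid C (G0 `|` G).
have [A [PA maxA]] := @Zorn_bigcup _ P (fun F FP Ftot => union_valid V0 FP Ftot).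
pose A' := G0 `|` A.
have [Af Aa As Ab] := PA.
have A'00 : A' (0, 0) by left; exists 0; rewrite scale0r.
have tot : forall z, exists a, A' (z, a).
  move=> z; have [//|nz] := pselect (exists a, A' (z, a)).
  have nz' : forall a, ~ A' (z, a) by move=> a Ha; apply: nz; exists a.
  have [G' [VG' sub [al Gal]]] := gext cC absC PA A'00 nz'.
  exfalso; apply: (maxA G').
    split; first by move=> p Hp; apply: sub; right.
    by move=> H; apply: (nz' al); right; apply: H.
  rewrite /P (_ : G0 `|` G' = G') //.
  by apply/seteqP; split; [move=> p [Hp|Hp] //; apply: sub; left | move=> p Hp; right].
have [F HF] := choice tot.
exists F; split.
- by move=> x y; apply: (Af (x + y)); [apply: HF | apply: Aa; apply: HF].
- by move=> t x; apply: (Af (t *: x)); [apply: HF | apply: As; apply: HF].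
- by apply: (Af x0); [apply: HF | left; exists 1; rewrite scale1r].
- by move=> c Cc; apply: (Ab c) => //; apply: HF.
Qed.

Lemma open_ball_in (R : realType) (Y : normedModType R) (C : set Y) (c : Y) :
  open C -> C c -> exists e, 0 < e /\ forall u, `|u| < e -> C (c + u).
Proof.
move=> oC Cc.
have : nbhs c C by move: oC; rewrite openE => /(_ _ Cc).
move=> /nbhs_ballP [e /= e0 sub]; exists e; split => // u ue.
apply: sub; rewrite -ball_normE /= opprD addrA subrr sub0r normrN //.
Qed.

Lemma lin_cont (R : realType) (Y : normedModType R) (F : Y -> R) (e : R) :
  (forall x y, F (x + y) = F x + F y) -> (forall (t : R) x, F (t *: x) = t * F x) ->
  0 < e -> (forall u, `|u| < e -> F u <= 1) -> continuous F.
Proof.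
move=> Fa Fs e0 Fb.
have Fn : forall v, F (- v) = - F v.
  by move=> v; rewrite -scaleN1r Fs mulN1r.
have Fb2 : forall u, `|u| < e -> `|F u| <= 1.
  move=> u ue; rewrite ler_norml; apply/andP; split; last exact: Fb.
  by rewrite lerNl -Fn; apply: Fb; rewrite normrN.
move=> x; apply/cvgrPdist_lt => eps eps0.
rewrite nearE; apply/nbhs_ballP; exists (e * eps / 2); first by rewrite /= divr_gt0 // mulr_gt0.
move=> t; rewrite -ball_normE /= => Ht.
have -> : F x - F t = F (x - t) by rewrite Fa Fn.
set v := x - t in Ht *.
have -> : v = (eps / 2) *: ((2 / eps) *: v).
  by rewrite scalerA (_ : eps / 2 * (2 / eps) = 1) ?scale1r //; field; rewrite gt_eqF.
  
rewrite Fs normrM.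
have h1 : `|F ((2 / eps) *: v)| <= 1.
  apply: Fb2; rewrite normrZ ger0_norm; last by rewrite divr_ge0 // ltW.
  rewrite mulrAC ltr_pdivrMr //; lra.
rewrite ger0_norm; last by rewrite divr_ge0 // ltW.
have : eps / 2 * `|F ((2 / eps) *: v)| <= eps / 2.
  by rewrite -[X in _ <= X]mulr1 ler_wpM2l // divr_ge0 // ltW.
lra.
Qed.

Lemma separate (R : realType) (Y : normedModType R) (C : set Y) (c0 x0 : Y) :
  convexY C -> open C -> C c0 -> ~ C x0 ->
  exists f : Y -> R, [/\ in_dual f, f x0 = f c0 + 1 & forall c, C c -> f c <= f x0].
Proof.
move=> cC oC Cc0 nCx0.
have [e [e0 Cb]] := open_ball_in oC Cc0.
pose C' := [set y | C (c0 + y)].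
have cC' : convexY C'.
  move=> x y t t0 t1 Cx Cy; rewrite /C' /=.
  have -> : c0 + (t *: x + (1 - t) *: y) = t *: (c0 + x) + (1 - t) *: (c0 + y).
    by rewrite !scalerDr addrACA -scalerDl subrKC scale1r.
  exact: cC.
have C'0 : C' 0 by rewrite /C' /= addr0.
have absC : forall y, exists s, 0 < s /\ C' (s *: y).
  move=> y; have ny : 0 < `|y| + 1 by rewrite ltr_wpDl.
  exists (e / (2 * (`|y| + 1))); split; first by rewrite divr_gt0 // mulr_gt0.
  apply: Cb; rewrite normrZ ger0_norm; last by rewrite divr_ge0 ?mulr_ge0 ?ltW.
  have : e / (2 * (`|y| + 1)) * `|y| <= e / (2 * (`|y| + 1)) * (`|y| + 1).
    by rewrite ler_wpM2l ?lerDl // divr_ge0 ?mulr_ge0 ?ltW.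
  have -> : e / (2 * (`|y| + 1)) * (`|y| + 1) = e / 2 by field; rewrite gt_eqF.
  lra.
have nC' : ~ C' (x0 - c0) by rewrite /C' /= subrKC.
have [F [Fa Fs Fx Fb]] := core cC' C'0 absC nC'.
have Fn : forall v, F (- v) = - F v by move=> v; rewrite -scaleN1r Fs mulN1r.
exists F; split.
- split => //; apply: (lin_cont Fa Fs e0) => u ue; apply: Fb; exact: Cb.
- by move: Fx; rewrite Fa Fn => <-; rewrite addrC subrK.
- move=> c Cc; have : C' (c - c0) by rewrite /C' /= subrKC.
  move=> /Fb; rewrite Fa Fn => H.
  have : F x0 = F c0 + 1 by move: Fx; rewrite Fa Fn => <-; rewrite addrC subrK.
  lra.
Qed.

Lemma separate2 (R : realType) (Y : normedModType R) (C : set Y) (c0 x0 : Y) :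
  convexY C -> open C -> C c0 -> ~ C x0 ->
  exists f : Y -> R, [/\ in_dual f, f c0 = f x0 + 1 & forall c, C c -> f x0 <= f c].
Proof.
move=> cC oC Cc0 nCx0.
have [f [[fa fs fc] fx fb]] := separate cC oC Cc0 nCx0.
exists (fun y => - f y); split.
- split.
  + by move=> x y; rewrite fa opprD.
  + by move=> t x; rewrite fs mulrN.
  + by move=> x; apply: continuousN; exact: fc.
- rewrite fx; lra.
- by move=> c Cc; rewrite lerN2; apply: fb.
Qed.

Lemma small_scale (R : realType) (Y : normedModType R) (y : Y) (e : R) : 0 < e ->
  exists s, 0 < s /\ `|s *: y| < e.
Proof.
move=> e0; have ny : 0 < `|y| + 1 by rewrite ltr_wpDl.
exists (e / (2 * (`|y| + 1))); split; first by rewrite divr_gt0 // mulr_gt0.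
rewrite normrZ ger0_norm; last by rewrite divr_ge0 ?mulr_ge0 ?ltW.
have : e / (2 * (`|y| + 1)) * `|y| <= e / (2 * (`|y| + 1)) * (`|y| + 1).
  by rewrite ler_wpM2l ?lerDl // divr_ge0 ?mulr_ge0 ?ltW.
have -> : e / (2 * (`|y| + 1)) * (`|y| + 1) = e / 2 by field; rewrite gt_eqF.
lra.
Qed.

Lemma open_of_ball (R : realType) (Y : normedModType R) (C : set Y) :
  (forall y, C y -> exists d, 0 < d /\ forall v, `|v| < d -> C (y + v)) -> open C.
Proof.
move=> H; rewrite openE => y Cy; have [d [d0 Hd]] := H y Cy.
apply/nbhs_ballP; exists d => //= z; rewrite -ball_normE /= => Hz.
by rewrite -(subrKC y z); apply: Hd; rewrite distrC.
Qed.

Definition iK (R : realType) (Y : normedModType R) (K : set Y) (k : Y) :=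
  exists e, 0 < e /\ forall u, `|u| < e -> K (k + u).

Lemma int_iK (R : realType) (Y : normedModType R) (K : set Y) k :
  interior K k -> iK K k.
Proof.
move=> /nbhs_ballP [e /= e0 sub]; exists e; split => // u ue.
apply: sub; rewrite -ball_normE /= opprD addrA subrr sub0r normrN //.
Qed.

Lemma iK_int (R : realType) (Y : normedModType R) (K : set Y) k :
  iK K k -> interior K k.
Proof.
move=> [e [e0 H]]; apply/nbhs_ballP; exists e => //= z; rewrite -ball_normE /= => Hz.
by rewrite -(subrKC k z); apply: H; rewrite distrC.
Qed.

Lemma lim_le (R : realType) (x c q : R) :
  (forall s, 0 < s -> x <= c + s * q) -> 0 <= q -> x <= c.
Proof.
move=> H q0; rewrite leNgt; apply/negP => xc.
have q1 : 0 < q + 1 by lra.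
have s0 : 0 < (x - c) / (q + 1) by rewrite divr_gt0 // subr_gt0.
have := H _ s0.
have : (x - c) / (q + 1) * q < x - c.
  rewrite mulrAC ltr_pdivrMr //; nra.
lra.
Qed.

Lemma dir_ge0 (R : realType) (x c q : R) :
  (forall t, 0 < t -> x <= c + t * q) -> x <= c -> 0 <= q.
Proof.
move=> H xc; rewrite leNgt; apply/negP => q0.
have t0 : 0 < (c - x + 1) / (- q) by rewrite divr_gt0; lra.
have := H _ t0.
have -> : (c - x + 1) / - q * q = - (c - x + 1) by field; rewrite ?oppr_eq0 lt_eqF.
lra.
Qed.

Lemma cone_facts (R : realType) (Y : normedModType R) (K : set Y) :
  pointed_closed_convex_cone K ->
  [/\ K 0, forall x y, K x -> K y -> K (x + y),
      forall k k', K k -> iK K k' -> iK K (k + k'),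
      forall k1 k2 t, iK K k1 -> iK K k2 -> 0 <= t -> t <= 1 -> iK K (t *: k1 + (1 - t) *: k2)
    & forall k t, 0 < t -> iK K k -> iK K (t *: k)].
Proof.
move=> [Kc Kv Kcl Kp].
have K0 : K 0 by have : ([set 0] : set Y) 0 by []; rewrite -Kp => -[].
have Kadd : forall x y, K x -> K y -> K (x + y).
  move=> x y Kx Ky.
  have -> : x + y = 2 *: ((1/2) *: x + (1 - 1/2) *: y).
    have h1 : (2:R) * (1/2) = 1 by rewrite mul1r mulfV // pnatr_eq0.
    have h2 : (2:R) * (1 - 1/2) = 1 by rewrite mulrBr h1 mulr1; lra.
    by rewrite scalerDr !scalerA h1 h2 !scale1r.
  apply: Kc; first by [].
  have h3 : (0:R) <= 1/2 by rewrite mul1r invr_ge0.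
  have h4 : (1/2 : R) <= 1 by rewrite mul1r invf_le1 // ler1n.
  by apply: Kv.
split => //.
- move=> k k' Kk [e [e0 H]]; exists e; split => // u ue.
  by rewrite -addrA; apply: Kadd => //; apply: H.
- move=> k1 k2 t [e1 [e10 H1]] [e2 [e20 H2]] t0 t1.
  exists (Num.min e1 e2); split; first by rewrite lt_min e10 e20.
  move=> u; rewrite lt_min => /andP [u1 u2].
  have -> : t *: k1 + (1 - t) *: k2 + u = t *: (k1 + u) + (1 - t) *: (k2 + u).
    by rewrite !scalerDr addrACA -scalerDl subrKC scale1r.
  by apply: Kv => //; [apply: H1 | apply: H2].
- move=> k t t0 [e [e0 H]]; exists (t * e); split; first by rewrite mulr_gt0.
  move=> u ue.
  have -> : t *: k + u = t *: (k + t^-1 *: u).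
    by rewrite scalerDr scalerA mulfV ?gt_eqF // scale1r.
  apply: Kc; first exact: ltW.
  apply: H; rewrite normrZ ger0_norm ?invr_ge0 ?ltW //.
  by rewrite mulrC ltr_pdivrMr // mulrC.
Qed.


Lemma dual_nz_pos (R : realType) (Y : normedModType R) (K : set Y) (f : Y -> R) :
  in_dual_cone_nz K f -> exists y, 0 < f y.
Proof.
move=> [[fa fs fc] fK fnz].
have [[y fy]|H] := pselect (exists y, f y != 0); last first.
  exfalso; apply: fnz; apply/funext => y.
  by have [//|fy] := eqVneq (f y) 0; exfalso; apply: H; exists y.
move: fy; rewrite neq_lt => /orP [fy0|fy0]; last by exists y.
by exists (-1 *: y); rewrite fs mulN1r oppr_gt0.
Qed.

Unset Implicit Arguments. Set Strict Implicit.
Theorem mainTheorem1 (R : realType) (Y : normedModType R) (K A B : set Y) :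
  pointed_closed_convex_cone K -> A !=set0 -> B !=set0 ->
  (* (i) *)
  ((A `<=` set_add B K ->
      forall f : Y -> R, in_dual_cone_nz K f ->
        setR_add (f @` A) `[0, +oo[ `<=` setR_add (f @` B) `[0, +oo[)
   /\
   (convexY (set_add B K) -> closed (set_add B K) ->
      (forall f : Y -> R, in_dual_cone_nz K f ->
        setR_add (f @` A) `[0, +oo[ `<=` setR_add (f @` B) `[0, +oo[) ->
      A `<=` set_add B K))
  /\
  (* (ii) *)
  (interior K !=set0 ->
   (A `<=` set_add B (interior K) ->
      forall f : Y -> R, in_dual_cone_nz K f ->
        f @` A `<=` setR_add (f @` B) `]0, +oo[)
   /\
   (convexY (set_add B K) ->
      (forall f : Y -> R, in_dual_cone_nz K f ->
        f @` A `<=` setR_add (f @` B) `]0, +oo[) ->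
      A `<=` set_add B (interior K))).
Proof.
move=> Kpc [a0 Aa0] [b0 Bb0].
have [K0 Kadd iKadd iKconv iKscale] := cone_facts Kpc.
have [Kc Kv Kcl Kp] := Kpc.
split; first split.
- move=> AsubBK f [[fa fs fc] fK fnz] y [_ [a Aa <-] [r r0 <-]].
  move: r0; rewrite /= in_itv /= andbT => r0.
  have [b Bb [k Kk abk]] := AsubBK a Aa.
  exists (f b); first by exists b.
  exists (f k + r); last by rewrite -abk fa addrA.
  by rewrite /= in_itv /= andbT; have := fK k Kk; lra.
- move=> cE clE H a Aa.
  have [//|nEa] := pselect (set_add B K a); exfalso.
  have [e [e0 Eb]] := open_ball_in (closed_openC clE) nEa.
  pose C := [set y | exists w u, [/\ set_add B K w, `|u| < e & y = w + u]].
  have cC : convexY C.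
    move=> x y t t0 t1 [w1 [u1 [Ew1 u1e ->]]] [w2 [u2 [Ew2 u2e ->]]].
    exists (t *: w1 + (1-t) *: w2), (t *: u1 + (1-t) *: u2); split.
    + exact: cE.
    + apply: le_lt_trans (ler_normD _ _) _.
      rewrite !normrZ !ger0_norm //; last by lra.
      have [->|tn0] := eqVneq t 0; first by rewrite mul0r add0r subr0 mul1r.
      have tp : 0 < t by rewrite lt0r tn0.
      have h1 : t * `|u1| < t * e by rewrite ltr_pM2l.
      have h2 : (1 - t) * `|u2| <= (1 - t) * e by rewrite ler_wpM2l ?subr_ge0 // ltW.
      nra.
    + by rewrite !scalerDr addrACA.
  have oC : open C.
    apply: open_of_ball => y [w [u [Ew ue ->]]].
    exists (e - `|u|); split; first by rewrite subr_gt0.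
    move=> v ve; exists w, (u + v); split => //; last by rewrite addrA.
    apply: le_lt_trans (ler_normD _ _) _; lra.
  have Cb0 : C b0.
    exists b0, 0; split; [exists b0 => //; exists 0 => //; by rewrite addr0 | by rewrite normr0 | by rewrite addr0].
  have nCa : ~ C a.
    move=> [w [u [Ew ue E1]]]; apply: (Eb (- u)); first by rewrite normrN.
    by rewrite E1 addrK.
  have [f [fd fc0 fb]] := separate2 cC oC Cb0 nCa.
  have [fa fs fcont] := fd.
  have fN : forall v, f (- v) = - f v by move=> v; rewrite -scaleN1r fs mulN1r.
  have fK : forall k, K k -> 0 <= f k.
    move=> k Kk; apply: (@dir_ge0 _ (f a) (f b0)); last exact: fb.
    move=> t t0; rewrite -fs -fa; apply: fb.
    exists (b0 + t *: k), 0; split; [|by rewrite normr0 | by rewrite addr0].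
    by exists b0 => //; exists (t *: k) => //; apply: Kc => //; exact: ltW.
  have fnz : f <> (fun _ => 0) by move=> E0; move: fc0; rewrite E0 /=; lra.
  have : setR_add (f @` B) `[0, +oo[ (f a).
    apply: (H f (And3 fd fK fnz)); exists (f a); first by exists a.
    by exists 0; [rewrite /= in_itv /= lexx | rewrite addr0].
  move=> [_ [b Bb <-] [r r0 E1]].
  move: r0; rewrite /= in_itv /= andbT => r0.
  have [s [s0 su]] := small_scale (b0 - a) e0.
  have : C (b + - (s *: (b0 - a))).
    exists b, (- (s *: (b0 - a))); split => //; last by rewrite normrN.
    by exists b => //; exists 0 => //; rewrite addr0.
  move=> /fb; rewrite fa fN fs fa fN fc0; lra.
- move=> [k0 ik0]; have ik0' := int_iK ik0.
  have Kk0 : K k0 by have [e [e0 He]] := ik0'; have := He 0; rewrite normr0 addr0; apply.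
  split.
  + move=> AsubBiK f [[fa fs fc] fK fnz] _ [a Aa <-].
    have [b Bb [k ik abk]] := AsubBiK a Aa.
    exists (f b); first by exists b.
    exists (f k); last by rewrite -abk fa.
    rewrite /= in_itv /= andbT.
    have [e [e0 He]] := int_iK ik.
    have [y fy] := dual_nz_pos (And3 (And3 fa fs fc) fK fnz).
    have [s [s0 sy]] := small_scale y e0.
    have := fK _ (He (- (s *: y)) ltac:(by rewrite normrN)).
    rewrite fa -scaleN1r fs fs; nra.
  + move=> cE H a Aa.
    have [//|nDa] := pselect (set_add B (interior K) a); exfalso.
    have cD : convexY (set_add B (interior K)).
      move=> x y t t0 t1 [b1 Bb1 [k1 ik1 <-]] [b2 Bb2 [k2 ik2 <-]].
      have : set_add B K (t *: (b1 + 0) + (1 - t) *: (b2 + 0)).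
        by apply: cE => //; [exists b1 => //; exists 0 | exists b2 => //; exists 0].
      rewrite !addr0 => -[b Bb [k Kk Eb]].
      exists b => //; exists (k + (t *: k1 + (1 - t) *: k2)).
        by apply: iK_int; apply: iKadd => //; apply: iKconv => //; exact: int_iK.
      by rewrite addrA Eb !scalerDr addrACA.
    have oD : open (set_add B (interior K)).
      apply: open_of_ball => y [b Bb [k ik <-]].
      have [e [e0 He]] := int_iK ik.
      exists (e / 2); split; first by rewrite divr_gt0.
      move=> v ve; exists b => //; exists (k + v); last by rewrite addrA.
      apply: iK_int; exists (e / 2); split; first by rewrite divr_gt0.
      move=> u ue; rewrite -addrA; apply: He.
      apply: le_lt_trans (ler_normD _ _) _; lra.
    have Dc0 : set_add B (interior K) (b0 + k0) by exists b0 => //; exists k0.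
    have [f [fd fc0 fb]] := separate2 cD oD Dc0 nDa.
    have [fa fs fcont] := fd.
    have fK : forall k, K k -> 0 <= f k.
      move=> k Kk; apply: (@dir_ge0 _ (f a) (f (b0 + k0))); last exact: fb.
      move=> t t0.
      have HD : set_add B (interior K) (b0 + (t *: k + k0)).
        exists b0 => //; exists (t *: k + k0) => //.
        by apply: iK_int; apply: iKadd => //; apply: Kc => //; exact: ltW.
      have := fb _ HD; rewrite !fa fs; lra.
    have fnz : f <> (fun _ => 0) by move=> E0; move: fc0; rewrite E0 /=; lra.
    have : setR_add (f @` B) `]0, +oo[ (f a).
      by apply: (H f (And3 fd fK fnz)); exists a.
    move=> [_ [b Bb <-] [r r0 E1]].
    move: r0; rewrite /= in_itv /= andbT => r0.
    have : f a <= f b.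
      apply: (@lim_le _ _ _ (f k0)); last exact: fK.
      move=> s s0.
      have HD : set_add B (interior K) (b + s *: k0).
        by exists b => //; exists (s *: k0) => //; apply: iK_int; apply: iKscale.
      by have := fb _ HD; rewrite fa fs.
    lra.
Qed.
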